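(* Let $\mathbf{X}$ be a set of discrete random variables with sample space $\Omega(\mathbf{X})$, let $O$ be a positive unital circuit over $\mathbf{X}$ and let $\rho$ be a density matrix of the same size as $O(\mathbf{x})$. Then $p_{\mathbf{X}}(\mathbf{x})=\operatorname{Tr}[O(\mathbf{x})\rho]$ is a probability distribution on $\Omega(\mathbf{X})$, i.e. $p_{\mathbf{X}}(\mathbf{x})\ge 0$ for all $\mathbf{x}\in\Omega(\mathbf{X})$ and $\sum_{\mathbf{x}\in\Omega(\mathbf{X})}p_{\mathbf{X}}(\mathbf{x})=1$.
   Context: A density matrix is a PSD complex matrix of trace one. A POVM is a finite family of PSD matrices summing to the identity. A quantum operation from $d\times d$ to $d'\times d'$ matrices is $\Phi(A)=\sum_j K_jAK_j^*$ with $d'\times d$ matrices $K_j$, $\sum_jK_j^*K_j\le\mathbb{1}$ (Loewner order); it is unital if $\Phi(\mathbb{1}_d)=\mathbb{1}_{d'}$. A partition circuit over $\mathbf{X}=\{X_0,\dots,X_{N-1}\}$ is a rooted binary tree whose leaves are in bijection with the variables (leaf $k$ carries $X_k$ with finite sample space $\Omega(X_k)$), each internal unit $k$ having two children $k_l,k_r$; $\mathbf{x}_k$ denotes an assignment to the variables at the leaves below $k$. A positive unital circuit assigns to each leaf $k$ a POVM $\{E_{x_k}\}_{x_k\in\Omega(X_k)}$ and to each internal unit $k$ a unital quantum operation $\Phi_k$, and computes $O_k(\mathbf{x}_k)=E_{x_k}$ at leaves and $O_k(\mathbf{x}_k)=\Phi_k(O_{k_l}(\mathbf{x}_{k_l})\otimes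 O_{k_r}(\mathbf{x}_{k_r}))$ at internal units ($\otimes$ the Kronecker product); $O(\mathbf{x})=O_{\mathrm{root}}(\mathbf{x})$. *)

(* Defs.v *)
From HB Require Import structures.
From mathcomp Require Import all_boot all_order all_algebra.
From mathcomp Require Import complex mxtens.
From mathcomp Require Import reals.
Set Implicit Arguments.
Unset Strict Implicit.
Unset Printing Implicit Defensive.
Import Order.TTheory GRing.Theory Num.Theory.
Local Open Scope ring_scope.

Section Quantum.
Variable C : numClosedFieldType.

Definition adjmx m n (A : 'M[C]_(m, n)) : 'M[C]_(n, m) :=
  \matrix_(i, j) (A j i)^*.

Definition psd n (A : 'M[C]_n) : Prop :=
  adjmx A = A /\ forall v : 'cV[C]_n, 0 <= (adjmx v *m A *m v) 0 0.

Definition loewner n (A B : 'M[C]_n) : Prop := psd (B - A).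

Definition density n (rho : 'M[C]_n) : Prop := psd rho /\ \tr rho = 1.

Definition povm (T : finType) n (E : T -> 'M[C]_n) : Prop :=
  (forall x, psd (E x)) /\ \sum_(x : T) E x = 1%:M.

Definition kraus_apply d' d (K : seq 'M[C]_(d', d)) (A : 'M[C]_d) : 'M[C]_d' :=
  \sum_(M <- K) M *m A *m adjmx M.

Definition quantum_op d' d (K : seq 'M[C]_(d', d)) : Prop :=
  loewner (\sum_(M <- K) adjmx M *m M) 1%:M.

Definition unital_op d' d (K : seq 'M[C]_(d', d)) : Prop :=
  kraus_apply K 1%:M = 1%:M.

Variables (N : nat) (Om : 'I_N -> finType).

Definition assignment := {dffun forall k : 'I_N, Om k}.

(* partition circuit (rooted binary tree) with matrix-valued units;
   the index is the size of the output matrices of the unit *)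
Inductive circuit : nat -> Type :=
| CLeaf (d : nat) (k : 'I_N) (E : Om k -> 'M[C]_d) : circuit d
| CNode (d dl dr : nat) (K : seq 'M[C]_(d, dl * dr))
        (l : circuit dl) (r : circuit dr) : circuit d.

Fixpoint leaves d (t : circuit d) : seq 'I_N :=
  match t with
  | CLeaf _ k _ => [:: k]
  | CNode _ _ _ _ l r => leaves l ++ leaves r
  end.

Definition partition_circuit d (t : circuit d) : Prop :=
  perm_eq (leaves t) (enum 'I_N).

Fixpoint positive_unital d (t : circuit d) : Prop :=
  match t with
  | CLeaf _ k E => povm E
  | CNode _ _ _ K l r =>
      quantum_op K /\ unital_op K /\ positive_unital l /\ positive_unital r
  end.

Fixpoint circuit_eval d (t : circuit d) (x : assignment) : 'M[C]_d :=
  match t with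
  | CLeaf _ k E => E (x k)
  | CNode _ _ _ K l r => kraus_apply K (circuit_eval l x *t circuit_eval r x)
  end.

End Quantum.

(* Main.v *)
Require Import Defs.
From HB Require Import structures.
From mathcomp Require Import all_boot all_order all_algebra.
From mathcomp Require Import complex mxtens.
From mathcomp Require Import reals.
From mathcomp Require Import sesquilinear spectral.

Module Helpers.
Set Implicit Arguments.
Unset Strict Implicit.
Unset Printing Implicit Defensive.
Import Order.TTheory GRing.Theory Num.Theory Num.Def.
Local Open Scope ring_scope.
Section Mx.
Variable C : numClosedFieldType.

Lemma adjmxE m n (A : 'M[C]_(m, n)) : adjmx A = map_mx conjC (A^T).
Proof. by apply/matrixP => i j; rewrite !mxE. Qed.

Lemma adjmxK m n (A : 'M[C]_(m, n)) : adjmx (adjmx A) = A.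
Proof. by apply/matrixP => i j; rewrite !mxE conjCK. Qed.

Lemma adjmx_mul m n p (A : 'M[C]_(m, n)) (B : 'M[C]_(n, p)) :
  adjmx (A *m B) = adjmx B *m adjmx A.
Proof. by rewrite !adjmxE trmx_mul map_mxM. Qed.

Lemma adjmx_tens m n p q (A : 'M[C]_(m, n)) (B : 'M[C]_(p, q)) :
  adjmx (A *t B) = adjmx A *t adjmx B.
Proof. by apply/matrixP => i j; rewrite !mxE rmorphM. Qed.

Lemma psd_gram n p (H : 'M[C]_(n, p)) : psd (H *m adjmx H).
Proof.
split; first by rewrite adjmx_mul adjmxK.
move=> v.
have -> : adjmx v *m (H *m adjmx H) *m v = adjmx (adjmx H *m v) *m (adjmx H *m v).
  by rewrite adjmx_mul adjmxK !mulmxA.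
rewrite mxE.
apply: sumr_ge0 => k _; rewrite !mxE.
by rewrite mulrC -normCK exprn_ge0.
Qed.

Lemma psd0 n : psd (0 : 'M[C]_n).
Proof.
split; first by apply/matrixP => i j; rewrite !mxE conjC0.
by move=> v; rewrite mulmx0 mul0mx mxE.
Qed.

Lemma psdD n (A B : 'M[C]_n) : psd A -> psd B -> psd (A + B).
Proof.
move=> [hA pA] [hB pB]; split.
  by rewrite -[in RHS]hA -[in RHS]hB; apply/matrixP => i j; rewrite !mxE rmorphD.
by move=> v; rewrite mulmxDr mulmxDl mxE addr_ge0.
Qed.

Lemma psd_decomp n (A : 'M[C]_n) : psd A -> exists F : 'M[C]_n, A = F *m adjmx F.
Proof.
move=> [hA pA].
have hs : A \is hermsymmx.
  by apply/is_hermitianmxP; rewrite expr0 scale1r -adjmxE hA.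
have /orthomx_spectralP eA := hermitian_normalmx hs.
set P := spectralmx A in eA; set D := spectral_diag A in eA.
have uP : P \is unitarymx by apply: spectral_unitarymx.
rewrite invmx_unitary // -adjmxE in eA.
have PP : P *m adjmx P = 1%:M by rewrite adjmxE; apply/unitarymxP.
have dD : forall i, 0 <= D 0 i.
  move=> i; have := pA (adjmx (row i P)).
  have -> : D 0 i = (P *m A *m adjmx P) i i.
    rewrite eA !mulmxA PP mul1mx -mulmxA PP mulmx1 mxE; set b := (i == i); have -> : b = true by rewrite /b; apply/eqP. by rewrite mulr1n.
  rewrite adjmxK !mxE; congr (0 <= _); apply: eq_bigr => j _; rewrite !mxE.
  congr (_ * _); apply: eq_bigr => k _; rewrite !mxE //.
pose S := \row_i sqrtC (D 0 i).
exists (adjmx P *m diag_mx S).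
rewrite adjmx_mul adjmxK mulmxA -[_ *m diag_mx S *m _]mulmxA.
have -> : adjmx (diag_mx S) = diag_mx S.
  apply/matrixP => i j; rewrite !mxE; case: (eqVneq j i) => [->|ne].
    by rewrite !mulr1n conj_Creal // ger0_real // sqrtC_ge0.
  by rewrite !mulr0n ?conjC0 //.
rewrite mulmx_diag eA; congr (_ *m diag_mx _ *m _).
by apply/rowP => i; rewrite !mxE -expr2 sqrtCK.
Qed.


Lemma tr_gram m n (X : 'M[C]_(m, n)) : 0 <= \tr (X *m adjmx X).
Proof.
rewrite /mxtrace; apply: sumr_ge0 => i _; rewrite mxE.
by apply: sumr_ge0 => k _; rewrite !mxE -normCK exprn_ge0.
Qed.

Lemma tr_psd n (A B : 'M[C]_n) : psd A -> psd B -> 0 <= \tr (A *m B).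
Proof.
move=> /psd_decomp [F ->] /psd_decomp [G ->].
rewrite mxtrace_mulC !mulmxA mxtrace_mulC !mulmxA.
have -> : adjmx F *m G *m adjmx G *m F = (adjmx F *m G) *m adjmx (adjmx F *m G).
  by rewrite adjmx_mul adjmxK !mulmxA.
exact: tr_gram.
Qed.

Lemma psd_tens m n (A : 'M[C]_m) (B : 'M[C]_n) : psd A -> psd B -> psd (A *t B).
Proof.
move=> /psd_decomp [F ->] /psd_decomp [G ->].
by rewrite -tensmx_mul -adjmx_tens; apply: psd_gram.
Qed.

Lemma psd_big I (r : seq I) n (F : I -> 'M[C]_n) :
  (forall i, psd (F i)) -> psd (\sum_(i <- r) F i).
Proof.
move=> H; elim: r => [|a r IH]; first by rewrite big_nil; apply: psd0.
by rewrite big_cons; apply: psdD.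
Qed.

Lemma psd_kraus d' d (K : seq 'M[C]_(d', d)) A : psd A -> psd (kraus_apply K A).
Proof.
move=> /psd_decomp [F ->]; apply: psd_big => M.
have -> : M *m (F *m adjmx F) *m adjmx M = (M *m F) *m adjmx (M *m F).
  by rewrite adjmx_mul !mulmxA.
exact: psd_gram.
Qed.

Lemma kraus_sum d' d (K : seq 'M[C]_(d', d)) I (r : seq I) (P : pred I) F :
  \sum_(i <- r | P i) kraus_apply K (F i) = kraus_apply K (\sum_(i <- r | P i) F i).
Proof.
rewrite /kraus_apply exchange_big /=; apply: eq_bigr => M _.
by rewrite mulmx_sumr mulmx_suml.
Qed.

Lemma tens_suml I (r : seq I) (P : pred I) m n p q (F : I -> 'M[C]_(m, n)) (B : 'M[C]_(p, q)) :
  \sum_(i <- r | P i) (F i *t B) = (\sum_(i <- r | P i) F i) *t B.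
Proof.
apply/matrixP => i j; rewrite summxE [in RHS]mxE summxE mulr_suml; apply: eq_bigr => k _.
by rewrite !mxE.
Qed.

Lemma tens_sumr I (r : seq I) (P : pred I) m n p q (A : 'M[C]_(m, n)) (F : I -> 'M[C]_(p, q)) :
  \sum_(i <- r | P i) (A *t F i) = A *t (\sum_(i <- r | P i) F i).
Proof.
apply/matrixP => i j; rewrite summxE [in RHS]mxE summxE mulr_sumr; apply: eq_bigr => k _.
by rewrite !mxE.
Qed.

Lemma tens11 m n : (1%:M : 'M[C]_m) *t (1%:M : 'M[C]_n) = 1%:M.
Proof.
apply/matrixP => i j.
case: (mxtens_indexP i) => i0 i1; case: (mxtens_indexP j) => j0 j1.
rewrite tensmxE !mxE.
have inj := can_inj (@mxtens_indexK m n).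
case: (eqVneq (i0, i1) (j0, j1)) => [[-> ->]|ne].
  by rewrite !eqxx mulr1.
rewrite (_ : (mxtens_index (i0, i1) == mxtens_index (j0, j1)) = false); last first.
  by apply/negbTE; apply: contra ne => /eqP /inj ->.
case: (eqVneq i0 j0) => [e0|n0]; last by rewrite mul0r.
case: (eqVneq i1 j1) => [e1|n1]; last by rewrite mulr0.
by move: ne; rewrite e0 e1 eqxx.
Qed.

End Mx.
Section Circ.
Variables (C : numClosedFieldType) (N : nat) (Om : 'I_N -> finType).
Local Notation A := (assignment Om).

Definition merge (L : seq 'I_N) (y z : A) : A :=
  [ffun k => if k \in L then y k else z k].

Lemma mergeE (L : seq 'I_N) (y z : A) k : merge L y z k = if k \in L then y k else z k.
Proof. by rewrite ffunE. Qed.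

Definition agree (L : seq 'I_N) (x x0 : A) : bool :=
  [forall k, (k \notin L) ==> (x k == x0 k)].

Lemma agreeP (L : seq 'I_N) (x x0 : A) : reflect (forall k, k \notin L -> x k = x0 k) (agree L x x0).
Proof.
apply: (iffP forallP) => H k.
  by move=> kL; move: (H k); rewrite kL => /eqP.
by apply/implyP => kL; rewrite H.
Qed.

Lemma eval_local d (t : circuit C Om d) (x y : A) :
  (forall k, k \in leaves t -> x k = y k) -> circuit_eval t x = circuit_eval t y.
Proof.
elim: t => [d' k E|d' dl dr K l IHl r IHr] /= H.
  by rewrite H // mem_seq1.
rewrite IHl; last by move=> k kin; apply: H; rewrite mem_cat kin.
by rewrite IHr // => k kin; apply: H; rewrite mem_cat kin orbT.
Qed.

Lemma sum_local d (t : circuit C Om d) :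
  positive_unital t -> uniq (leaves t) -> forall x0 : A,
  \sum_(x | agree (leaves t) x x0) circuit_eval t x = 1%:M.
Proof.
elim: t => [d' k E|d' dl dr K l IHl r IHr] /=.
  move=> [_ sE] _ x0.
  pose h (a : Om k) : A := [ffun j => dfwith x0 a j].
  rewrite -sE (reindex_onto h (fun x : A => x k)) /=.
    apply: eq_big => [a|a _]; last by rewrite ffunE dfwith_in.
    rewrite ffunE dfwith_in eqxx andbT; apply/agreeP => j; rewrite mem_seq1 => nj.
    by rewrite ffunE dfwith_out // eq_sym.
  move=> x /agreeP H; apply/ffunP => j; rewrite ffunE.
  case: (eqVneq k j) => [<-|nj]; first by rewrite dfwith_in.
  by rewrite dfwith_out // H // mem_seq1 eq_sym.
move=> [_ [uK [pl pr]]]; rewrite cat_uniq => /and3P [ul dis ur] x0.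
have disj : forall k, k \in leaves l -> k \notin leaves r.
  by move=> k kl; apply: contraNN dis => kr; apply/hasP; exists k.
rewrite kraus_sum -[RHS]uK; congr kraus_apply.
pose L1 := leaves l; pose L2 := leaves r.
pose Q (p : A * A) := agree L1 p.1 x0 && agree L2 p.2 x0.
rewrite (reindex_onto (fun p : A * A => merge L1 p.1 p.2)
                      (fun x => (merge L1 x x0, merge L1 x0 x))) /=; last first.
  move=> x _; apply/ffunP => k; rewrite !mergeE; by case: (k \in L1).
rewrite (eq_bigl Q); last first.
  move=> [y z]; rewrite /Q /=; apply/idP/idP.
    move=> /andP [/agreeP H /eqP [e1 e2]]; apply/andP; split.
      by rewrite -e1; apply/agreeP => k kn; rewrite mergeE (negPf kn).
    rewrite -e2; apply/agreeP => k kn; rewrite mergeE; case: ifP => // kl.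
    by rewrite H // mem_cat kl.
  move=> /andP [/agreeP Hy /agreeP Hz]; apply/andP; split.
    apply/agreeP => k; rewrite mem_cat negb_or => /andP [k1 k2].
    by rewrite mergeE (negPf k1) Hz.
  apply/eqP; congr pair; apply/ffunP => k; rewrite !mergeE;
    case: (boolP (k \in L1)) => kl //.
    by rewrite Hy.
  by rewrite Hz // disj.
rewrite (eq_bigr (fun p : A * A => circuit_eval l p.1 *t circuit_eval r p.2)); last first.
  move=> [y z] _ /=; congr tensmx; apply: eval_local => k kin; rewrite mergeE.
    by rewrite kin.
  by case: ifP => // kl; move: (disj k kl); rewrite kin.
rewrite /Q -(pair_big_dep (fun y => agree L1 y x0) (fun _ z => agree L2 z x0)
   (fun y z => circuit_eval l y *t circuit_eval r z)) /=.
rewrite (eq_bigr (fun y => circuit_eval l y *t 1%:M)); last first.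
  by move=> y _; rewrite tens_sumr IHr.
by rewrite tens_suml IHl // tens11.
Qed.


Lemma eval_psd d (t : circuit C Om d) (x : A) :
  positive_unital t -> psd (circuit_eval t x).
Proof.
elim: t => [d' k E|d' dl dr K l IHl r IHr] /=.
  by move=> [pE _]; apply: pE.
move=> [_ [_ [pl pr]]]; apply: psd_kraus; apply: psd_tens; [exact: IHl | exact: IHr].
Qed.

Lemma mx1_eq0 n : (1%:M : 'M[C]_n) = 0 -> n = 0%N.
Proof.
case: n => // n /matrixP /(_ ord0 ord0); rewrite !mxE eqxx /= => /eqP.
by rewrite oner_eq0.
Qed.

Lemma empty_dim d (t : circuit C Om d) k :
  positive_unital t -> k \in leaves t -> #|Om k| = 0%N -> d = 0%N.
Proof.
elim: t => [d' k' E|d' dl dr K l IHl r IHr] /=.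
  move=> [_ sE]; rewrite mem_seq1 => /eqP -> c0.
  apply: mx1_eq0; rewrite -sE; apply: big_pred0 => a.
  by move: (card0_eq c0 a).
move=> [_ [uK [pl pr]]]; rewrite mem_cat => kin c0.
have h0 : (dl * dr = 0)%N.
  case/orP: kin => kin; [by rewrite (IHl pl kin c0) | by rewrite (IHr pr kin c0) muln0].
apply: mx1_eq0; rewrite -uK /kraus_apply; apply: big1 => M _.
apply/matrixP => i j; rewrite -mulmxA !mxE; apply: big1 => q _.
by have := ltn_ord q; rewrite {2}h0.
Qed.

End Circ.
End Helpers.
Import Helpers.
Import Order.TTheory GRing.Theory Num.Theory.
Local Open Scope ring_scope.

Theorem theorem2 (R : realType) (N : nat) (Om : 'I_N -> finType) (d : nat)
  (O : circuit R[i] Om d) (rho : 'M[R[i]]_d) :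
  partition_circuit O -> positive_unital O -> density rho ->
  (forall x : assignment Om, 0 <= \tr (circuit_eval O x *m rho)) /\
  \sum_(x : assignment Om) \tr (circuit_eval O x *m rho) = 1.
Proof.
move=> pc pu [prho trho]; split.
  by move=> x; apply: tr_psd => //; apply: eval_psd.
have ul : uniq (leaves O) by rewrite (perm_uniq pc) enum_uniq.
have allk : forall k, k \in leaves O by move=> k; rewrite (perm_mem pc) mem_enum.
have [H|H] := boolP [forall k, 0 < #|Om k|]%N.
  have Hk : forall k, exists a : Om k, a \in Om k.
    by move=> k; apply/card_gt0P; move/forallP: H => /(_ k).
  pose x0 : assignment Om := [ffun k => xchoose (Hk k)].
  have := sum_local pu ul x0.
  rewrite (eq_bigl xpredT); last first.
    by move=> x; apply/agreeP => k; rewrite allk.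
  move=> hs; rewrite -trho -raddf_sum /= -mulmx_suml.
  by rewrite hs mul1mx.
exfalso; move: H; rewrite negb_forall => /existsP [k]; rewrite -leqNgt leqn0 => /eqP c0.
have d0 := empty_dim pu (allk k) c0.
move: rho trho prho; rewrite d0 => rho; rewrite /mxtrace big_ord0 => /eqP.
by rewrite eq_sym oner_eq0.
Qed.
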